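(* Let $\mathcal{A}$ be an abelian category and $\alpha$ an amplitude on $\mathcal{A}$. Then $\alpha(A)=\mathrm{d}_\alpha(A,0)$ for every $A\in\operatorname{ob}\mathcal{A}$.
   Context: An amplitude on an abelian category $\mathcal{A}$ is a function $\alpha\colon\operatorname{ob}\mathcal{A}\to[0,\infty]$ with $\alpha(0)=0$ such that for every short exact sequence $0\to A\to B\to C\to0$, $\alpha(A)\le\alpha(B)$, $\alpha(C)\le\alpha(B)$ and $\alpha(B)\le\alpha(A)+\alpha(C)$. The cost of a zigzag $A\xleftarrow{\gamma_1}C_1\xrightarrow{\gamma_2}\cdots\xleftarrow{\gamma_{n-1}}C_n\xrightarrow{\gamma_n}B$ is $\sum_i\alpha(\ker\gamma_i)+\alpha(\operatorname{coker}\gamma_i)$; the path metric $\mathrm{d}_\alpha(A,B)$ is the infimum of costs over all zigzags between $A$ and $B$ ($\inf\emptyset=\infty$). *)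

(* Defs.v *)
From HB Require Import structures.
From mathcomp Require Import all_boot all_order all_algebra.
From mathcomp Require Import boolp classical_sets reals constructive_ereal ereal.
Set Implicit Arguments. Unset Strict Implicit. Unset Printing Implicit Defensive.
Import Order.TTheory GRing.Theory Num.Theory.
Local Open Scope classical_set_scope.
Local Open Scope ereal_scope.

Record Category := {
  Obj :> Type;
  Hom : Obj -> Obj -> Type;
  comp : forall A B C : Obj, Hom B C -> Hom A B -> Hom A C;
  idm : forall A : Obj, Hom A A;
  comp_assoc : forall A B C D (f : Hom A B) (g : Hom B C) (h : Hom C D),
      comp h (comp g f) = comp (comp h g) f;
  comp_id_l : forall A B (f : Hom A B), comp (idm B) f = f;
  comp_id_r : forall A B (f : Hom A B), comp f (idm A) = f }.

Arguments comp {c A B C}.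
Arguments idm {c}.

Section CatNotions.
Variable C : Category.

Definition is_mono (A B : C) (f : Hom A B) : Prop :=
  forall X (g h : Hom X A), comp f g = comp f h -> g = h.
Definition is_epi (A B : C) (f : Hom A B) : Prop :=
  forall X (g h : Hom B X), comp g f = comp h f -> g = h.

Definition is_zero_obj (Z : C) : Prop :=
  forall X : C, (inhabited (Hom Z X) /\ forall f g : Hom Z X, f = g) /\
                (inhabited (Hom X Z) /\ forall f g : Hom X Z, f = g).

Definition is_zero_mor (A B : C) (f : Hom A B) : Prop :=
  exists Z (u : Hom A Z) (v : Hom Z B), is_zero_obj Z /\ f = comp v u.

Definition is_kernel (A B K : C) (f : Hom A B) (k : Hom K A) : Prop :=
  is_zero_mor (comp f k) /\
  forall X (h : Hom X A), is_zero_mor (comp f h) ->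
    exists u : Hom X K, comp k u = h /\ forall u' : Hom X K, comp k u' = h -> u' = u.

Definition is_cokernel (A B Q : C) (f : Hom A B) (q : Hom B Q) : Prop :=
  is_zero_mor (comp q f) /\
  forall X (h : Hom B X), is_zero_mor (comp h f) ->
    exists u : Hom Q X, comp u q = h /\ forall u' : Hom Q X, comp u' q = h -> u' = u.

Definition is_product (A B P : C) (p1 : Hom P A) (p2 : Hom P B) : Prop :=
  forall X (f : Hom X A) (g : Hom X B),
    exists u : Hom X P, (comp p1 u = f /\ comp p2 u = g) /\
      forall u', comp p1 u' = f -> comp p2 u' = g -> u' = u.

Definition is_coproduct (A B S : C) (i1 : Hom A S) (i2 : Hom B S) : Prop :=
  forall X (f : Hom A X) (g : Hom B X),
    exists u : Hom S X, (comp u i1 = f /\ comp u i2 = g) /\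
      forall u', comp u' i1 = f -> comp u' i2 = g -> u' = u.

End CatNotions.

(* Kernels, cokernels and a zero object are chosen. *)
Record AbelianCategory := {
  cat :> Category;
  zero_obj : cat;
  zero_obj_is_zero : is_zero_obj zero_obj;
  has_products : forall A B : cat,
      exists (P : cat) (p1 : Hom P A) (p2 : Hom P B), is_product p1 p2;
  has_coproducts : forall A B : cat,
      exists (S : cat) (i1 : Hom A S) (i2 : Hom B S), is_coproduct i1 i2;
  ker : forall A B : cat, Hom A B -> cat;
  kerm : forall A B (f : Hom A B), Hom (ker f) A;
  ker_spec : forall A B (f : Hom A B), is_kernel f (kerm f);
  coker : forall A B : cat, Hom A B -> cat;
  cokerm : forall A B (f : Hom A B), Hom B (coker f);
  coker_spec : forall A B (f : Hom A B), is_cokernel f (cokerm f);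
  mono_normal : forall A B (f : Hom A B), is_mono f ->
      exists (D : cat) (g : Hom B D), is_kernel g f;
  epi_normal : forall A B (f : Hom A B), is_epi f ->
      exists (D : cat) (g : Hom D A), is_cokernel g f }.

Arguments ker {a A B}.
Arguments coker {a A B}.

Definition short_exact (Ab : AbelianCategory) (A B D : Ab)
  (f : Hom A B) (g : Hom B D) : Prop :=
  is_kernel g f /\ is_cokernel f g.

Definition amplitude (R : realType) (Ab : AbelianCategory) (alpha : Ab -> \bar R) : Prop :=
  (forall X : Ab, 0 <= alpha X) /\
  alpha (zero_obj Ab) = 0 /\
  forall (A B D : Ab) (f : Hom A B) (g : Hom B D), short_exact f g ->
    [/\ alpha A <= alpha B, alpha D <= alpha B & alpha B <= alpha A + alpha D].

(* ---------- Zigzags ----------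
   A zigzag  A <-g1- C1 -g2-> X1 <-g3- C2 -g4-> ... -> B,
   i.e. a (possibly empty) sequence of spans. *)
Inductive zigzag (Ab : AbelianCategory) : Ab -> Ab -> Type :=
  | zz_nil : forall X : Ab, zigzag X X
  | zz_cons : forall (A Cm X B : Ab), Hom Cm A -> Hom Cm X -> zigzag X B -> zigzag A B.

Definition mor_cost (R : realType) (Ab : AbelianCategory) (alpha : Ab -> \bar R)
  (X Y : Ab) (g : Hom X Y) : \bar R :=
  alpha (ker g) + alpha (coker g).

Fixpoint zz_cost (R : realType) (Ab : AbelianCategory) (alpha : Ab -> \bar R)
  (A B : Ab) (z : zigzag A B) : \bar R :=
  match z with
  | zz_nil _ => 0
  | zz_cons _ _ _ _ g1 g2 r =>
      mor_cost alpha g1 + mor_cost alpha g2 + zz_cost alpha r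
  end.

(* Path metric: infimum of costs of zigzags from A to B (inf of empty = +oo). *)
Definition path_metric (R : realType) (Ab : AbelianCategory) (alpha : Ab -> \bar R)
  (A B : Ab) : \bar R :=
  ereal_inf [set zz_cost alpha z | z in [set: zigzag A B]].

(* Main.v *)
Require Import Defs.
From mathcomp Require Import all_boot all_order all_algebra.
From mathcomp Require Import boolp classical_sets reals constructive_ereal ereal.
Import Order.TTheory GRing.Theory Num.Theory.
Local Open Scope ereal_scope.
Set Implicit Arguments.
Local Notation Hom := Defs.Hom.
Local Notation comp := Defs.comp.

Section Gen.
Variable C : Category.

Lemma zm_compl (A B D : C) (f : Hom A B) (g : Hom B D) :
  is_zero_mor f -> is_zero_mor (comp g f).
Proof.
case=> Z [u [v [HZ ->]]]; exists Z, u, (comp g v); split=> //.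
by rewrite comp_assoc.
Qed.

Lemma zm_compr (A B D : C) (f : Hom B D) (g : Hom A B) :
  is_zero_mor f -> is_zero_mor (comp f g).
Proof.
case=> Z [u [v [HZ ->]]]; exists Z, (comp u g), v; split=> //.
by rewrite comp_assoc.
Qed.

Lemma coker_epi (A B Q : C) (f : Hom A B) (q : Hom B Q) :
  is_cokernel f q -> is_epi q.
Proof.
case=> Hz Hu X u v Huv.
have Hz' : is_zero_mor (comp (comp u q) f).
  by rewrite -comp_assoc; apply: zm_compl.
have [u0 [_ Hun]] := Hu X (comp u q) Hz'.
by rewrite (Hun u erefl) (Hun v (esym Huv)).
Qed.

Lemma ker_of_coker (A B D Q : C) (f : Hom A B) (g : Hom B D) (q : Hom B Q) :
  is_kernel g f -> is_cokernel f q -> is_kernel q f.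
Proof.
move=> [Hk1 Hk2] [Hc1 Hc2]; split=> // X h Hh.
have [u [Hu _]] := Hc2 D g Hk1.
apply: Hk2; rewrite -Hu -comp_assoc; exact: zm_compl.
Qed.

Lemma zero_of_endo (Z0 K : C) :
  is_zero_obj Z0 -> (forall e : Hom K K, e = idm K) -> is_zero_obj K.
Proof.
move=> HZ He X.
case: (HZ K) => [[[w] Hw] [[t] Ht]].
case: (HZ X) => [[[a] Ha] [[b] Hb]].
have Hwt : comp w t = idm K by apply: He.
split; split.
- by constructor; exact: (comp a t).
- move=> f g; rewrite -(comp_id_r f) -(comp_id_r g) -Hwt !comp_assoc.
  by rewrite (Ha (comp f w) (comp g w)).
- by constructor; exact: (comp w b).
- move=> f g; rewrite -(comp_id_l f) -(comp_id_l g) -Hwt -!comp_assoc.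
  by rewrite (Hb (comp t f) (comp t g)).
Qed.

Lemma ker_from_zero (Z A K : C) (f : Hom Z A) (k : Hom K Z) :
  is_zero_obj Z -> is_kernel f k -> forall e : Hom K K, e = idm K.
Proof.
move=> HZ [Hz Hu] e.
have [u [_ Hun]] := Hu K k Hz.
have HZK := (HZ K).2.2.
transitivity u; [apply: Hun | symmetry; apply: Hun]; apply: HZK.
Qed.

End Gen.

Section AbSec.
Variables (R : realType) (Ab : AbelianCategory) (alpha : Ab -> \bar R).
Hypothesis Hamp : amplitude alpha.

Lemma alpha_zero (Z : Ab) : is_zero_obj Z -> alpha Z = 0.
Proof.
move=> HZ.
have HZ0 := @zero_obj_is_zero Ab.
case: Hamp => H0 [Hz H].
case: (HZ (zero_obj Ab)) => [[[f] Hf] _].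
have Hse : short_exact f (idm (zero_obj Ab)).
  split; split.
  - by exists (zero_obj Ab), f, (idm _).
  - move=> X h _.
    case: (HZ X) => _ [[u] Hu].
    exists u; split; first by apply: (HZ0 X).2.2.
    by move=> u' _; apply: Hu.
  - by exists (zero_obj Ab), f, (idm _).
  - move=> X h _.
    exists h; split; first by apply: (HZ0 X).1.2.
    by move=> u' _; apply: (HZ0 X).1.2.
have [H1 _ _] := H _ _ _ _ _ Hse.
apply/le_anti/andP; split; last exact: H0.
by rewrite -Hz.
Qed.

Lemma mono_le (A B : Ab) (f : Hom A B) : is_mono f -> alpha A <= alpha B.
Proof.
move=> Hf.
have [D [g Hg]] := mono_normal Hf.
have Hc := coker_spec f.
have Hk := ker_of_coker Hg Hc.
case: Hamp => _ [_ H].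
by have [] := H _ _ _ _ _ (conj Hk Hc).
Qed.

Lemma m_mono (X Y K I : Ab) (g : Hom X Y) (k : Hom K X) (p : Hom X I)
  (m : Hom I Y) : is_kernel g k -> is_cokernel k p -> comp m p = g -> is_mono m.
Proof.
move=> Hk Hp Hmp V a b Hab.
have [T [j1 [j2 HT]]] := has_coproducts V V.
have [nab [[Hn1 Hn2] _]] := HT I a b.
have [nV [[Hd1 Hd2] _]] := HT V (idm V) (idm V).
have HnVepi : is_epi nV.
  move=> W u v Huv.
  by rewrite -(comp_id_r u) -(comp_id_r v) -Hd1 !comp_assoc Huv.
have [D [h Hh]] := epi_normal HnVepi.
have He := coker_spec (comp nab h).
set e := cokerm (comp nab h) in He *.
have Hz1 : is_zero_mor (comp (comp e nab) h).
  by rewrite -comp_assoc; exact: He.1.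
have [w [Hw _]] := Hh.2 _ (comp e nab) Hz1.
have Hea : comp e a = w.
  by rewrite -Hn1 comp_assoc -Hw -comp_assoc Hd1 comp_id_r.
have Heb : comp e b = w.
  by rewrite -Hn2 comp_assoc -Hw -comp_assoc Hd2 comp_id_r.
have Hmab : comp m nab = comp (comp m a) nV.
  have [u0 [_ Hun]] := HT Y (comp m a) (comp m b).
  rewrite (Hun (comp m nab)); last by rewrite -comp_assoc Hn2.
    2: by rewrite -comp_assoc Hn1.
  symmetry; apply: Hun; rewrite -comp_assoc ?Hd1 ?Hd2 comp_id_r //.
have Hz2 : is_zero_mor (comp m (comp nab h)).
  rewrite comp_assoc Hmab -comp_assoc; apply: zm_compl; exact: Hh.1.
have [s [Hs _]] := He.2 _ m Hz2.
have Hepi_e := coker_epi He.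
have Hepi_p := coker_epi Hp.
have Hep : is_epi (comp e p).
  move=> W u v H; apply: Hepi_e; apply: Hepi_p; by rewrite -!comp_assoc.
have [D' [r Hr]] := epi_normal Hep.
have Hgr : is_zero_mor (comp g r).
  have -> : comp g r = comp s (comp (comp e p) r).
    by rewrite -Hmp -Hs !comp_assoc.
  apply: zm_compl; exact: Hr.1.
have [w' [Hw' _]] := Hk.2 _ r Hgr.
have Hpr : is_zero_mor (comp p r).
  rewrite -Hw' comp_assoc; apply: zm_compr; exact: Hp.1.
have [t [Ht _]] := Hr.2 _ p Hpr.
have Hte : comp t e = idm I.
  by apply: Hepi_p; rewrite -comp_assoc Ht comp_id_l.
by rewrite -(comp_id_l a) -(comp_id_l b) -Hte -!comp_assoc Hea Heb.
Qed.

Lemma lip1 (X Y : Ab) (g : Hom X Y) : alpha X <= alpha (ker g) + alpha Y.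
Proof.
have Hk := ker_spec g.
have Hp := coker_spec (kerm g).
have Hkp := ker_of_coker Hk Hp.
have Hamp' := Hamp.
case: Hamp' => _ [_ H].
have [_ _ H3] := H _ _ _ _ _ (conj Hkp Hp).
have [m [Hm _]] := Hp.2 _ g Hk.1.
have HI := mono_le (m_mono m Hk Hp Hm).
exact: le_trans H3 (leeD2l _ HI).
Qed.

End AbSec.

Definition opCat (C : Category) : Category.
refine (@Build_Category (Obj C) (fun A B => Hom B A)
  (fun A B D g f => comp f g) (fun A => idm A) _ _ _).
- by move=> A B D E f g h /=; rewrite comp_assoc.
- by move=> A B f /=; rewrite comp_id_r.
- by move=> A B f /=; rewrite comp_id_l.
Defined.

Lemma zo_op (C : Category) (Z : C) : @is_zero_obj (opCat C) Z <-> is_zero_obj Z.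
Proof.
by split=> H X; case: (H X) => [[a b] [c d]]; split; split.
Qed.

Lemma zm_op (C : Category) (A B : C) (f : Hom A B) :
  @is_zero_mor (opCat C) B A f <-> is_zero_mor f.
Proof.
split; case=> Z [u [v [HZ E]]]; exists Z, v, u; split=> //; by apply/zo_op.
Qed.

Arguments zm_op {C A B} f.
Arguments zo_op {C} Z.
Lemma ker_op (C : Category) (A B K : C) (f : Hom A B) (k : Hom K A) :
  @is_cokernel (opCat C) B A K f k <-> is_kernel f k.
Proof.
split; case=> H1 H2; split.
- exact (proj1 (zm_op (@Defs.comp C _ _ _ f k)) H1).
- move=> X h Hh; apply: H2; exact (proj2 (zm_op (@Defs.comp C _ _ _ f h)) Hh).
- exact (proj2 (zm_op (@Defs.comp C _ _ _ f k)) H1).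
- move=> X h Hh; apply: H2; exact (proj1 (zm_op (@Defs.comp C _ _ _ f h)) Hh).
Qed.

Arguments ker_op {C A B K} f k.
Lemma coker_op (C : Category) (A B K : C) (f : Hom A B) (q : Hom B K) :
  @is_kernel (opCat C) B A K f q <-> is_cokernel f q.
Proof.
split; case=> H1 H2; split.
- exact (proj1 (zm_op (@Defs.comp C _ _ _ q f)) H1).
- move=> X h Hh; apply: H2; exact (proj2 (zm_op (@Defs.comp C _ _ _ h f)) Hh).
- exact (proj2 (zm_op (@Defs.comp C _ _ _ q f)) H1).
- move=> X h Hh; apply: H2; exact (proj1 (zm_op (@Defs.comp C _ _ _ h f)) Hh).
Qed.

Arguments coker_op {C A B K} f q.
Definition opAb (Ab : AbelianCategory) : AbelianCategory.
refine (@Build_AbelianCategory (opCat Ab) (zero_obj Ab) _ _ _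
  (fun A B f => @coker Ab B A f) (fun A B f => @cokerm Ab B A f) _
  (fun A B f => @ker Ab B A f) (fun A B f => @kerm Ab B A f) _ _ _).
- exact (proj2 (zo_op _) (@zero_obj_is_zero Ab)).
- move=> A B; have [S [i1 [i2 H]]] := has_coproducts A B.
  by exists S, i1, i2.
- move=> A B; have [S [i1 [i2 H]]] := has_products A B.
  by exists S, i1, i2.
- move=> A B f; exact (proj2 (@coker_op Ab B A _ f (@cokerm Ab B A f)) (@coker_spec Ab B A f)).
- move=> A B f; exact (proj2 (@ker_op Ab B A _ f (@kerm Ab B A f)) (@ker_spec Ab B A f)).
- move=> A B f Hf; have [D [g Hg]] := @epi_normal Ab B A f Hf.
  exists D, g; exact (proj2 (@coker_op Ab D B A g f) Hg).
- move=> A B f Hf; have [D [g Hg]] := @mono_normal Ab B A f Hf.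
  exists D, g; exact (proj2 (@ker_op Ab A D B g f) Hg).
Defined.

Lemma amp_op (R : realType) (Ab : AbelianCategory) (alpha : Ab -> \bar R) :
  amplitude alpha -> @amplitude R (opAb Ab) alpha.
Proof.
case=> H0 [Hz H]; split=> //; split=> // A B D f g [Hk Hc].
have Hc' := proj1 (@coker_op Ab D B A g f) Hk.
have Hk' := proj1 (@ker_op Ab B A D f g) Hc.
have [H1 H2 H3] := H _ _ _ _ _ (conj Hk' Hc').
by split=> //; rewrite addeC.
Qed.

Section Main.
Variables (R : realType) (Ab : AbelianCategory) (alpha : Ab -> \bar R).
Hypothesis Hamp : amplitude alpha.

Lemma lip2 (X Y : Ab) (g : Hom X Y) : alpha Y <= alpha (coker g) + alpha X.
Proof. exact: (@lip1 R (opAb Ab) alpha (amp_op Hamp) Y X g). Qed.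

Lemma epi_le (A B : Ab) (f : Hom A B) : is_epi f -> alpha B <= alpha A.
Proof. move=> Hf; exact: (@mono_le R (opAb Ab) alpha (amp_op Hamp) B A f Hf). Qed.

Lemma zz_bound (A B : Ab) (z : zigzag A B) : alpha A <= zz_cost alpha z + alpha B.
Proof.
have H0 := Hamp.1.
elim: z => [X | A' Cm X B' g1 g2 r IH] /=.
  by rewrite add0e.
have h1 := @lip2 Cm A' g1.
have h2 := @lip1 R Ab alpha Hamp Cm X g2.
apply: (le_trans h1); rewrite /mor_cost.
apply: le_trans (leeD (lexx _) (le_trans h2 (leeD (lexx _) IH))) _.
rewrite -!addeA.
apply: le_trans (leeDr _ (H0 (ker g1))) _.
do 3 apply: leeD2l.
exact: (leeDr _ (H0 _)).
Qed.

Lemma coker_into_zero (A Z : Ab) (f : Hom A Z) : is_zero_obj Z ->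
  alpha (coker f) = 0.
Proof.
move=> HZ; apply: (alpha_zero Hamp).
apply: (@zero_of_endo Ab (zero_obj Ab) _ (@zero_obj_is_zero Ab)).
exact: (@ker_from_zero (opCat Ab) Z A _ f (cokerm f) (proj2 (zo_op _) HZ)
          (proj2 (coker_op f (cokerm f)) (coker_spec f))).
Qed.

Lemma ker_from_zero0 (A Z : Ab) (f : Hom Z A) : is_zero_obj Z ->
  alpha (ker f) = 0.
Proof.
move=> HZ; apply: (alpha_zero Hamp).
apply: (@zero_of_endo Ab (zero_obj Ab) _ (@zero_obj_is_zero Ab)).
exact: (ker_from_zero HZ (ker_spec f)).
Qed.

End Main.

Unset Implicit Arguments.

Theorem mainTheorem5 (R : realType) (Ab : AbelianCategory) (alpha : Ab -> \bar R) :
  amplitude alpha ->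
  forall A : Ab, alpha A = path_metric alpha A (zero_obj Ab).
Proof.
move=> Hamp A.
have HZ0 := @zero_obj_is_zero Ab.
apply/le_anti/andP; split.
  apply: le_ereal_inf_tmp => _ [z _ <-].
  have := zz_bound Hamp z.
  by rewrite (proj1 (proj2 Hamp)) adde0.
case: ((HZ0 A).1) => [[z] _].
pose zz := zz_cons z (idm (zero_obj Ab)) (zz_nil (zero_obj Ab)).
apply: le_trans (ereal_inf_lbound (x := zz_cost alpha zz) _) _.
  by exists zz.
rewrite /= /mor_cost.
rewrite (@ker_from_zero0 R Ab alpha Hamp _ _ z HZ0) (@ker_from_zero0 R Ab alpha Hamp _ _ (idm _) HZ0).
rewrite (@coker_into_zero R Ab alpha Hamp _ _ (idm (zero_obj Ab)) HZ0).
rewrite !add0e !adde0.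
exact: (epi_le Hamp (coker_epi (coker_spec z))).
Qed.
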